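(* Let $\lambda\in\mathbb{C}$ with $|\lambda|>1$, and let $g,h\in \mathrm{SL}(2,\mathbb{C})$ be $$g=\begin{pmatrix}\lambda&0\\0&\lambda^{-1}\end{pmatrix},\qquad h=\begin{pmatrix}a&b\\c&d\end{pmatrix}.$$ Put $M_g=|\lambda-1|+|\lambda^{-1}-1|$ and suppose $M_g<1$. If the subgroup $\langle g,h\rangle$ is discrete and non-elementary, then $$|abcd|^{1/2}\neq \frac{1-M_g}{M_g^2}.$$
   Context: A subgroup of $\mathrm{SL}(2,\mathbb{C})$ is discrete if it is discrete in the matrix topology. It is elementary if its action on $\mathbb{H}^3\cup\partial\mathbb{H}^3$ (via Möbius transformations) has a finite orbit; otherwise it is non-elementary. Since $|\lambda|>1$, $g$ is loxodromic. *)

(* Defs.v *)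
From Stdlib Require Import Reals List.
Open Scope R_scope.

Definition Cpx := (R * R)%type.
Definition Cre (z : Cpx) : R := fst z.
Definition Cim (z : Cpx) : R := snd z.
Definition Czero : Cpx := (0, 0).
Definition Cone : Cpx := (1, 0).
Definition Cadd (z w : Cpx) : Cpx := (fst z + fst w, snd z + snd w).
Definition Copp (z : Cpx) : Cpx := (- fst z, - snd z).
Definition Csub (z w : Cpx) : Cpx := Cadd z (Copp w).
Definition Cmul (z w : Cpx) : Cpx :=
  (fst z * fst w - snd z * snd w, fst z * snd w + snd z * fst w).
Definition Cconj (z : Cpx) : Cpx := (fst z, - snd z).
Definition Cnorm2 (z : Cpx) : R := fst z * fst z + snd z * snd z.
Definition Cmod (z : Cpx) : R := sqrt (Cnorm2 z).
Definition Cinv (z : Cpx) : Cpx := (fst z / Cnorm2 z, - snd z / Cnorm2 z).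
Definition Cdiv (z w : Cpx) : Cpx := Cmul z (Cinv w).
Definition RtoC (r : R) : Cpx := (r, 0).

Record Mat := mkMat { m11 : Cpx; m12 : Cpx; m21 : Cpx; m22 : Cpx }.

Definition Mmul (A B : Mat) : Mat :=
  mkMat (Cadd (Cmul (m11 A) (m11 B)) (Cmul (m12 A) (m21 B)))
        (Cadd (Cmul (m11 A) (m12 B)) (Cmul (m12 A) (m22 B)))
        (Cadd (Cmul (m21 A) (m11 B)) (Cmul (m22 A) (m21 B)))
        (Cadd (Cmul (m21 A) (m12 B)) (Cmul (m22 A) (m22 B))).
Definition Mid : Mat := mkMat Cone Czero Czero Cone.
Definition Mdet (A : Mat) : Cpx := Csub (Cmul (m11 A) (m22 A)) (Cmul (m12 A) (m21 A)).
Definition Minv_SL (A : Mat) : Mat := mkMat (m22 A) (Copp (m12 A)) (Copp (m21 A)) (m11 A).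

Definition in_SL2C (A : Mat) : Prop := Mdet A = Cone.

(** distance on matrices (entrywise l^1 norm, inducing the matrix topology) *)
Definition Mdist (A B : Mat) : R :=
  Cmod (Csub (m11 A) (m11 B)) + Cmod (Csub (m12 A) (m12 B)) +
  Cmod (Csub (m21 A) (m21 B)) + Cmod (Csub (m22 A) (m22 B)).

Inductive gen2 (g h : Mat) : Mat -> Prop :=
  | gen_id : gen2 g h Mid
  | gen_g : gen2 g h g
  | gen_h : gen2 g h h
  | gen_ginv : gen2 g h (Minv_SL g)
  | gen_hinv : gen2 g h (Minv_SL h)
  | gen_mul : forall A B, gen2 g h A -> gen2 g h B -> gen2 g h (Mmul A B).

Definition discrete (G : Mat -> Prop) : Prop :=
  forall A, G A -> exists eps, eps > 0 /\
    forall B, G B -> B <> A -> Mdist A B >= eps.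

(** Points of H^3 ∪ ∂H^3 in the upper half-space model:
    HPt z t = z + t j (with t > 0), BPt z = z ∈ C, Inf = ∞. *)
Inductive point := HPt (z : Cpx) (t : R) | BPt (z : Cpx) | Inf.

Definition valid_point (p : point) : Prop :=
  match p with HPt _ t => t > 0 | _ => True end.

(** Möbius action of A = [[a,b],[c,d]] : q ↦ (aq+b)(cq+d)^{-1}
    (Poincaré extension on H^3, fractional linear map on C ∪ {∞}). *)
Definition act (A : Mat) (p : point) : point :=
  let a := m11 A in let b := m12 A in let c := m21 A in let d := m22 A in
  match p with
  | HPt z t =>
      let w := Cadd (Cmul c z) d in
      let D := Cnorm2 w + Cnorm2 c * (t * t) in
      HPt (Cmul (RtoC (/ D))
             (Cadd (Cmul (Cadd (Cmul a z) b) (Cconj w))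
                   (Cmul (Cmul a (Cconj c)) (RtoC (t * t)))))
          (t / D)
  | BPt z =>
      let w := Cadd (Cmul c z) d in
      if Req_EM_T (fst w) 0 then
        if Req_EM_T (snd w) 0 then Inf
        else BPt (Cdiv (Cadd (Cmul a z) b) w)
      else BPt (Cdiv (Cadd (Cmul a z) b) w)
  | Inf =>
      if Req_EM_T (fst c) 0 then
        if Req_EM_T (snd c) 0 then Inf else BPt (Cdiv a c)
      else BPt (Cdiv a c)
  end.

Definition elementary (G : Mat -> Prop) : Prop :=
  exists p : point, valid_point p /\
    exists l : list point, forall A, G A -> In (act A p) l.

Definition non_elementary (G : Mat -> Prop) : Prop := ~ elementary G.

(* Main.v *)
Require Import Defs.
From Stdlib Require Import Reals List Lra Lia Classical.
Open Scope R_scope.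
From Coquelicot Require Complex.
Module Aux.
Import Complex.
Open Scope C_scope.
Lemma cadd_eq z w : Defs.Cadd z w = Cplus z w. Proof. reflexivity. Qed.
Lemma cmul_eq z w : Defs.Cmul z w = Cmult z w. Proof. reflexivity. Qed.
Lemma copp_eq z : Defs.Copp z = Complex.Copp z. Proof. reflexivity. Qed.
Lemma csub_eq z w : Defs.Csub z w = Cminus z w. Proof. reflexivity. Qed.
Lemma czero_eq : Defs.Czero = RtoC 0. Proof. reflexivity. Qed.
Lemma cone_eq : Defs.Cone = RtoC 1. Proof. reflexivity. Qed.
Lemma cinv_eq z : Defs.Cinv z = Complex.Cinv z.
Proof. destruct z as [x y]. unfold Defs.Cinv, Complex.Cinv, Cnorm2; simpl. f_equal; f_equal; ring. Qed.
Lemma cmod_eq z : Defs.Cmod z = Complex.Cmod z.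
Proof. destruct z as [x y]. unfold Defs.Cmod, Complex.Cmod, Cnorm2; simpl. f_equal; ring. Qed.

Ltac cnv := repeat match goal with
 | |- context [Defs.Cadd ?x ?y] => change (Defs.Cadd x y) with (Cplus x y)
 | |- context [Defs.Cmul ?x ?y] => change (Defs.Cmul x y) with (Cmult x y)
 | |- context [Defs.Csub ?x ?y] => change (Defs.Csub x y) with (Cminus x y)
 | |- context [Defs.Copp ?x] => change (Defs.Copp x) with (Complex.Copp x)
 | |- context [Defs.Czero] => change Defs.Czero with (RtoC 0)
 | |- context [Defs.Cone] => change Defs.Cone with (RtoC 1)
 | |- context [Defs.Cinv ?x] => rewrite (cinv_eq x)
 | |- context [Defs.Cmod ?x] => rewrite (cmod_eq x)
 end.
Ltac toC := match goal with |- @eq _ ?x ?y => change (@eq C x y) end.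
Ltac cring := cnv; first [reflexivity | toC; ring].
Ltac cnvH H := rewrite ?cadd_eq, ?cmul_eq, ?copp_eq, ?csub_eq, ?czero_eq, ?cone_eq, ?cinv_eq, ?cmod_eq in H.

Lemma Mat_eq (A B : Mat) : m11 A = m11 B -> m12 A = m12 B -> m21 A = m21 B -> m22 A = m22 B -> A = B.
Proof. destruct A, B; simpl; intros; subst; reflexivity. Qed.

Lemma Minv_Mmul A B : Minv_SL (Mmul A B) = Mmul (Minv_SL B) (Minv_SL A).
Proof. apply Mat_eq; destruct A, B; unfold Mmul, Minv_SL; simpl; cring. Qed.
Lemma Minv_Mid : Minv_SL Mid = Mid.
Proof. apply Mat_eq; unfold Mid, Minv_SL; simpl; cring. Qed.
Lemma Minv_inv A : Minv_SL (Minv_SL A) = A.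
Proof. apply Mat_eq; destruct A; unfold Minv_SL; simpl; cring. Qed.

Lemma gen_inv g h X : gen2 g h X -> gen2 g h (Minv_SL X).
Proof.
  induction 1.
  - rewrite Minv_Mid; constructor.
  - apply gen_ginv.
  - apply gen_hinv.
  - rewrite Minv_inv; constructor.
  - rewrite Minv_inv; constructor.
  - rewrite Minv_Mmul; apply gen_mul; auto.
Qed.

Lemma Cmod_mul0 x y : x * y = RtoC 0 -> x = RtoC 0 \/ y = RtoC 0.
Proof.
  intro H. assert (Cmod x * Cmod y = 0)%R by (rewrite <- Cmod_mult, H; apply Cmod_0).
  destruct (Rmult_integral _ _ H0); [left|right]; apply Cmod_eq_0; auto.
Qed.

Fixpoint pw (x : C) (n : nat) : C := match n with O => RtoC 1 | S n => x * pw x n end.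
Lemma pw_mod x n : Cmod (pw x n) = (Cmod x ^ n)%R.
Proof. induction n; simpl. apply Cmod_1. rewrite Cmod_mult, IHn; auto. Qed.
Lemma pw_mul x y n : pw (x*y) n = pw x n * pw y n.
Proof. induction n; simpl. ring. rewrite IHn; ring. Qed.
Lemma pw_one n : pw (RtoC 1) n = RtoC 1.
Proof. induction n; simpl. auto. rewrite IHn; ring. Qed.
End Aux.

Import Aux.
Module Aux2.
Import Complex.
Open Scope C_scope.

Lemma geo_ev (u : nat -> R) (r : R) N : (forall n, 0 <= u n)%R -> (0 <= r < 1)%R ->
  (forall n, (n >= N)%nat -> (u (S n) <= r * u n)%R) ->
  forall eps, (0 < eps)%R -> exists N', forall n, (n >= N')%nat -> (u n <= eps)%R.
Proof.
  intros Hu Hr Hs eps He.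
  assert (Hk : forall k, (u (N+k)%nat <= r^k * u N)%R).
  { induction k. simpl. rewrite Nat.add_0_r. lra.
    rewrite Nat.add_succ_r. eapply Rle_trans. apply Hs; lia. simpl.
    assert (0 <= r) by lra. nra. }
  assert (Hp : (0 < eps / (u N + 1))%R).
  { apply Rdiv_lt_0_compat; auto. pose proof (Hu N); lra. }
  destruct (pow_lt_1_zero r ltac:(rewrite Rabs_pos_eq; lra) _ Hp) as [K HK].
  exists (N+K)%nat. intros n Hn.
  replace n with (N + (n - N))%nat by lia.
  eapply Rle_trans. apply Hk.
  pose proof (HK (n - N)%nat ltac:(lia)) as H1.
  rewrite Rabs_pos_eq in H1 by (apply pow_le; lra).
  pose proof (Hu N) as H2.
  assert (H3 : (eps / (u N + 1) * u N <= eps)%R).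
  { unfold Rdiv. rewrite Rmult_assoc. rewrite <- (Rmult_1_r eps) at 2.
    apply Rmult_le_compat_l; [lra|].
    apply (Rmult_le_reg_l (u N + 1)); [lra|]. field_simplify; lra. }
  nra.
Qed.

Section Core.
Variables L a b c d : C.
Hypothesis HL : (Cmod L > 1)%R.
Hypothesis Hdet : a*d - b*c = RtoC 1.

Definition gM := mkMat L (RtoC 0) (RtoC 0) (/L).
Definition hM := mkMat a b c d.
Fixpoint hs n := match n with O => hM | S n => Mmul (Mmul (hs n) gM) (Minv_SL (hs n)) end.

Lemma L_nz : L <> RtoC 0.
Proof. intro H. rewrite H, Cmod_0 in HL. lra. Qed.
Lemma Lm : L * / L = RtoC 1.
Proof. field. apply L_nz. Qed.
Lemma mL : / L * L = RtoC 1.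
Proof. field. apply L_nz. Qed.
Lemma Cmod_m : Cmod (/ L) = (/ Cmod L)%R.
Proof. apply Cmod_inv, L_nz. Qed.
Lemma Cmod_m_lt1 : (Cmod (/ L) < 1)%R.
Proof. rewrite Cmod_m. rewrite <- Rinv_1; apply Rinv_lt_contravar; lra. Qed.
Lemma Cmod_m_pos : (0 < Cmod (/ L))%R.
Proof. rewrite Cmod_m. apply Rinv_0_lt_compat; lra. Qed.

Lemma sq_not1 : L * L <> RtoC 1.
Proof. intro H. assert (Cmod (L*L) = 1%R) by (rewrite H; apply Cmod_1).
  rewrite Cmod_mult in H0. nra. Qed.

Lemma delta_nz : L - / L <> RtoC 0.
Proof. intro H. apply sq_not1.
  transitivity (L * (L - /L) + L * / L). ring. rewrite H, Lm. ring. Qed.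

Lemma trace_nz : L + / L <> RtoC 0.
Proof. intro H. assert (Cmod (L*L) = 1%R).
  { replace (L*L) with (L*(L + /L) - L * /L) by ring. rewrite H, Lm.
    replace (L * RtoC 0 - RtoC 1) with (- RtoC 1) by ring. rewrite Cmod_opp; apply Cmod_1. }
  rewrite Cmod_mult in H0. nra. Qed.

Lemma step X : m11 X * m22 X - m12 X * m21 X = RtoC 1 ->
  let Y := Mmul (Mmul X gM) (Minv_SL X) in
  m11 Y = L + m12 X * m21 X * (L - /L) /\ m12 Y = -(m11 X * m12 X * (L - /L)) /\
  m21 Y = m21 X * m22 X * (L - /L) /\ m22 Y = /L - m12 X * m21 X * (L - /L) /\
  m11 Y * m22 Y - m12 Y * m21 Y = RtoC 1.
Proof.
  destruct X as [x y z w]. simpl. intro H.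
  assert (Hw : x * w = RtoC 1 + y * z) by (rewrite <- H; ring).
  unfold gM, Mmul, Minv_SL; simpl. cnv.
  assert (E1 : (x * L + y * RtoC 0) * w + (x * RtoC 0 + y * / L) * - z = L + y * z * (L - / L)).
  { transitivity (L * (x*w) - /L * (y*z)). ring. rewrite Hw. ring. }
  assert (E4 : (z * L + w * RtoC 0) * - y + (z * RtoC 0 + w * / L) * x = / L - y * z * (L - / L)).
  { transitivity (/L * (x*w) - L * (y*z)). ring. rewrite Hw. ring. }
  assert (E2 : (x * L + y * RtoC 0) * - y + (x * RtoC 0 + y * / L) * x = - (x * y * (L - / L))) by ring.
  assert (E3 : (z * L + w * RtoC 0) * w + (z * RtoC 0 + w * / L) * - z = z * w * (L - / L)) by ring.
  rewrite E1, E2, E3, E4. repeat split; try reflexivity.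
  transitivity (L * / L + (x*w - RtoC 1 - y*z) * (y * z) * ((L - /L) * (L - /L))). ring.
  replace (x*w - RtoC 1 - y*z) with (RtoC 0) by (rewrite Hw; ring). rewrite Lm. ring.
Qed.

Definition A n := m11 (hs n).
Definition B n := m12 (hs n).
Definition Cc n := m21 (hs n).
Definition D n := m22 (hs n).

Lemma hs_det n : A n * D n - B n * Cc n = RtoC 1.
Proof. induction n. exact Hdet. unfold A, B, Cc, D in *. simpl hs. apply (step _ IHn). Qed.

Lemma rec n : A (S n) = L + B n * Cc n * (L - /L) /\ B (S n) = -(A n * B n * (L - /L)) /\
  Cc (S n) = Cc n * D n * (L - /L) /\ D (S n) = /L - B n * Cc n * (L - /L).
Proof. pose proof (step (hs n) (hs_det n)) as H. simpl in H. unfold A, B, Cc, D; simpl hs.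
  destruct H as (H1 & H2 & H3 & H4 & _). auto. Qed.

Lemma AD n : A n * D n = RtoC 1 + B n * Cc n.
Proof. rewrite <- (hs_det n). ring. Qed.

Definition dl := Cmod (L - / L).
Definition MM := (Cmod (L - RtoC 1) + Cmod (/L - RtoC 1))%R.
Definition v n := Cmod (B n * Cc n).

Lemma dl_le : (dl <= MM)%R.
Proof. unfold dl, MM. replace (L - /L) with ((L - RtoC 1) + - (/L - RtoC 1)) by ring.
  rewrite <- (Cmod_opp (/L - RtoC 1)). apply Cmod_triangle. Qed.
Lemma MM_pos : (0 < MM)%R.
Proof. unfold MM. assert (Cmod L <= Cmod (L - RtoC 1) + Cmod (RtoC 1))%R.
  { replace L with ((L - RtoC 1) + RtoC 1) at 1 by ring. apply Cmod_triangle. }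
  rewrite Cmod_1 in H. pose proof (Cmod_ge_0 (/L - RtoC 1)). lra. Qed.
Lemma dl_pos : (0 < dl)%R.
Proof. unfold dl. destruct (Cmod_ge_0 (L - /L)); auto.
  exfalso. apply delta_nz. apply Cmod_eq_0. auto. Qed.
Lemma v_ge0 n : (0 <= v n)%R.
Proof. apply Cmod_ge_0. Qed.

Lemma v_step n : (v (S n) <= v n * (1 + v n) * dl^2)%R.
Proof. destruct (rec n) as (_ & HB & HC & _). unfold v. rewrite HB, HC.
  replace (-(A n * B n * (L - /L)) * (Cc n * D n * (L - /L))) with
    (-((A n * D n) * (B n * Cc n) * ((L - /L) * (L - /L)))) by ring.
  rewrite AD. set (p := B n * Cc n). rewrite Cmod_opp, !Cmod_mult. fold dl.
  assert (Cmod (RtoC 1 + p) <= 1 + Cmod p)%R.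
  { rewrite <- Cmod_1 at 2. apply Cmod_triangle. }
  pose proof (Cmod_ge_0 p). pose proof dl_pos.
  assert (0 <= Cmod p * (dl * dl))%R by (apply Rmult_le_pos; nra).
  simpl. rewrite Rmult_1_r.
  replace (Cmod p * (1 + Cmod p) * (dl * dl))%R with
   ((1 + Cmod p) * (Cmod p * (dl * dl)))%R by ring.
  rewrite Rmult_assoc. apply Rmult_le_compat_r; auto. Qed.

Lemma v1 : v 1 = (Cmod (a*b*c*d) * dl^2)%R.
Proof. destruct (rec 0) as (_ & HB & HC & _). unfold v. rewrite HB, HC.
  unfold A, B, Cc, D; simpl hs; unfold hM; simpl.
  replace (-(a * b * (L - /L)) * (c * d * (L - /L))) with
    (-((a*b*c*d) * ((L - /L) * (L - /L)))) by ring.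
  rewrite Cmod_opp, !Cmod_mult. fold dl. simpl. ring. Qed.

Lemma v_ev : sqrt (Cmod (a*b*c*d)) = ((1 - MM) / (MM * MM))%R -> (MM < 1)%R ->
  forall eps, (0 < eps)%R -> exists N, forall n, (n >= N)%nat -> (v n <= eps)%R.
Proof.
  intros Hs HM. set (X0 := Cmod (a*b*c*d)).
  assert (HX : X0 = ((1 - MM) / (MM * MM) * ((1 - MM) / (MM * MM)))%R).
  { rewrite <- Hs. symmetry. apply sqrt_sqrt. apply Cmod_ge_0. }
  pose proof MM_pos as Mp. pose proof dl_pos as dp. pose proof dl_le as dle.
  assert (HX2 : (X0 * (MM*MM) * (MM*MM) = (1 - MM) * (1 - MM))%R) by (rewrite HX; field; lra).
  set (q := ((1 + v 1) * dl^2)%R).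
  assert (Hv1 : v 1 = (X0 * dl^2)%R) by apply v1.
  assert (Hq : (0 <= q < 1)%R).
  { unfold q. split. pose proof (v_ge0 1). simpl. nra.
    assert (X0 >= 0)%R by (apply Rle_ge, Cmod_ge_0).
    assert (dl^2 <= MM*MM)%R by (simpl; nra).
    assert (v 1 * (MM * MM) <= (1 - MM) * (1 - MM))%R.
    { rewrite <- HX2, Hv1. apply Rmult_le_compat_r. nra. apply Rmult_le_compat_l; lra. }
    pose proof (v_ge0 1).
    assert ((1 + v 1) * dl^2 <= (1 + v 1) * (MM*MM))%R by (apply Rmult_le_compat_l; lra).
    nra. }
  assert (Hb : forall n, (v (S n) <= v 1)%R).
  { induction n. lra. eapply Rle_trans. apply v_step.
    pose proof (v_ge0 (S n)). assert (0 <= dl^2)%R by (simpl; nra).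
    assert (v (S n) * (1 + v (S n)) * dl ^ 2 <= v (S n) * q)%R.
    { unfold q. rewrite Rmult_assoc. apply Rmult_le_compat_l; auto. apply Rmult_le_compat_r; lra. }
    nra. }
  apply (geo_ev v q 1); auto. apply v_ge0.
  intros n Hn. destruct n. lia. eapply Rle_trans. apply v_step.
  pose proof (v_ge0 (S n)). assert (0 <= dl^2)%R by (simpl; nra).
  unfold q. rewrite Rmult_assoc. rewrite (Rmult_comm _ (v (S n))). apply Rmult_le_compat_l; auto.
  apply Rmult_le_compat_r; auto. specialize (Hb n). lra.
Qed.

Definition w n := (Cmod (B n) * Cmod (/L) ^ n)%R.
Definition z n := (Cmod (Cc n) * Cmod L ^ n)%R.

Lemma w_step n : (w (S (S n)) <= (1 + v n * dl * Cmod L) * dl * w (S n))%R.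
Proof.
  destruct (rec (S n)) as (_ & HB & _ & _). destruct (rec n) as (HA & _ & _ & _).
  set (p := B n * Cc n) in *. unfold w. rewrite HB, Cmod_opp, !Cmod_mult. fold dl.
  assert (E : (Cmod (A (S n)) * Cmod (/ L) = Cmod (RtoC 1 + / L * (p * (L - /L))))%R).
  { rewrite <- Cmod_mult, HA. f_equal. field. apply L_nz. }
  assert (Cmod (RtoC 1 + / L * (p * (L - /L))) <= 1 + v n * dl * Cmod L)%R.
  { eapply Rle_trans. apply Cmod_triangle. rewrite Cmod_1, !Cmod_mult. fold dl.
    pose proof Cmod_m_lt1. pose proof (Cmod_ge_0 p). pose proof dl_pos.
    assert (Cmod p * dl * Cmod (/ L) <= Cmod p * dl * Cmod L)%R.
    { apply Rmult_le_compat_l. nra. lra. }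
    change (v n) with (Cmod p). nra. }
  pose proof (Cmod_ge_0 (B (S n))). pose proof Cmod_m_pos. pose proof dl_pos.
  assert (0 <= Cmod (B (S n)) * Cmod (/ L) ^ S n * dl)%R.
  { apply Rmult_le_pos; [apply Rmult_le_pos; [auto| apply pow_le; lra]| lra]. }
  replace (Cmod (A (S n)) * Cmod (B (S n)) * dl * Cmod (/ L) ^ S (S n))%R with
    ((Cmod (A (S n)) * Cmod (/ L)) * (Cmod (B (S n)) * Cmod (/ L) ^ S n * dl))%R by (simpl; ring).
  rewrite E.
  replace ((1 + v n * dl * Cmod L) * dl * (Cmod (B (S n)) * Cmod (/ L) ^ S n))%R with
    ((1 + v n * dl * Cmod L) * (Cmod (B (S n)) * Cmod (/ L) ^ S n * dl))%R by ring.
  apply Rmult_le_compat_r; auto.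
Qed.

Lemma z_step n : (z (S (S n)) <= (1 + v n * dl * Cmod L) * dl * z (S n))%R.
Proof.
  destruct (rec (S n)) as (_ & _ & HC & _). destruct (rec n) as (_ & _ & _ & HD).
  set (p := B n * Cc n) in *. unfold z. rewrite HC, !Cmod_mult. fold dl.
  assert (E : (Cmod (D (S n)) * Cmod L = Cmod (RtoC 1 + - (p * (L - /L) * L)))%R).
  { rewrite <- Cmod_mult, HD. f_equal. field. apply L_nz. }
  assert (Cmod (RtoC 1 + - (p * (L - /L) * L)) <= 1 + v n * dl * Cmod L)%R.
  { eapply Rle_trans. apply Cmod_triangle. rewrite Cmod_1, Cmod_opp, !Cmod_mult. fold dl.
    change (v n) with (Cmod p). nra. }
  pose proof (Cmod_ge_0 (Cc (S n))). pose proof dl_pos.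
  assert (0 <= Cmod (Cc (S n)) * Cmod L ^ S n * dl)%R.
  { apply Rmult_le_pos; [apply Rmult_le_pos; [auto| apply pow_le; lra]| lra]. }
  replace (Cmod (Cc (S n)) * Cmod (D (S n)) * dl * Cmod L ^ S (S n))%R with
    ((Cmod (D (S n)) * Cmod L) * (Cmod (Cc (S n)) * Cmod L ^ S n * dl))%R by (simpl; ring).
  rewrite E.
  replace ((1 + v n * dl * Cmod L) * dl * (Cmod (Cc (S n)) * Cmod L ^ S n))%R with
    ((1 + v n * dl * Cmod L) * (Cmod (Cc (S n)) * Cmod L ^ S n * dl))%R by ring.
  apply Rmult_le_compat_r; auto.
Qed.

Lemma ratio : (MM < 1)%R -> exists eps, (0 < eps)%R /\
  forall x, (0 <= x <= eps)%R -> ((1 + x*dl*Cmod L)*dl <= (1+dl)/2)%R.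
Proof.
  intro HM. pose proof dl_pos. pose proof dl_le. set (T := Cmod L).
  assert (HT : (T > 1)%R) by exact HL.
  set (eps := ((1-dl)/(2*(dl*T+1)))%R).
  assert (He : (0 < eps)%R) by (unfold eps; apply Rdiv_lt_0_compat; nra).
  exists eps. split; auto. intros x Hx.
  assert (E : (eps*(dl*T) = (1-dl)/2 - (1-dl)/(2*(dl*T+1)))%R) by (unfold eps; field; nra).
  assert (x*(dl*T) <= eps*(dl*T))%R by (apply Rmult_le_compat_r; nra).
  assert (0 <= (1-dl)/(2*(dl*T+1)))%R by (apply Rlt_le; apply Rdiv_lt_0_compat; nra).
  assert (0 <= x*(dl*T))%R by (apply Rmult_le_pos; [lra| apply Rmult_le_pos; lra]).
  assert (x*(dl*T)*dl <= x*(dl*T))%R.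
  { rewrite <- (Rmult_1_r (x*(dl*T))) at 2. apply Rmult_le_compat_l; lra. }
  replace ((1 + x*dl*T)*dl)%R with (dl + x*(dl*T)*dl)%R by ring.
  lra.
Qed.

Lemma w_ev : (MM < 1)%R -> (forall eps, (0 < eps)%R -> exists N, forall n, (n >= N)%nat -> (v n <= eps)%R) ->
  forall eps, (0 < eps)%R -> exists N, forall n, (n >= N)%nat -> (w n <= eps)%R.
Proof.
  intros HM Hv. destruct (ratio HM) as [e1 [He1 Hr]]. destruct (Hv e1 He1) as [N HN].
  pose proof dl_pos. pose proof dl_le.
  apply (geo_ev w ((1+dl)/2) (S N)).
  - intro n. unfold w. apply Rmult_le_pos. apply Cmod_ge_0. apply pow_le. apply Cmod_ge_0.
  - lra.
  - intros n Hn. destruct n. lia. eapply Rle_trans. apply w_step.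
    apply Rmult_le_compat_r. unfold w. apply Rmult_le_pos. apply Cmod_ge_0. apply pow_le. apply Cmod_ge_0.
    apply Hr. split. apply v_ge0. apply HN. lia.
Qed.

Lemma z_ev : (MM < 1)%R -> (forall eps, (0 < eps)%R -> exists N, forall n, (n >= N)%nat -> (v n <= eps)%R) ->
  forall eps, (0 < eps)%R -> exists N, forall n, (n >= N)%nat -> (z n <= eps)%R.
Proof.
  intros HM Hv. destruct (ratio HM) as [e1 [He1 Hr]]. destruct (Hv e1 He1) as [N HN].
  pose proof dl_pos. pose proof dl_le.
  apply (geo_ev z ((1+dl)/2) (S N)).
  - intro n. unfold z. apply Rmult_le_pos. apply Cmod_ge_0. apply pow_le. apply Cmod_ge_0.
  - lra.
  - intros n Hn. destruct n. lia. eapply Rle_trans. apply z_step.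
    apply Rmult_le_compat_r. unfold z. apply Rmult_le_pos. apply Cmod_ge_0. apply pow_le. apply Cmod_ge_0.
    apply Hr. split. apply v_ge0. apply HN. lia.
Qed.

Definition gp n := mkMat (pw L n) (RtoC 0) (RtoC 0) (pw (/L) n).
Definition gq n := mkMat (pw (/L) n) (RtoC 0) (RtoC 0) (pw L n).

Lemma gp_gen n : gen2 gM hM (gp n).
Proof. induction n.
  - replace (gp 0) with Mid. constructor. apply Mat_eq; unfold gp, Mid; simpl; cring.
  - replace (gp (S n)) with (Mmul gM (gp n)). apply gen_mul; auto. constructor.
    apply Mat_eq; unfold gp, gM, Mmul; simpl; cring.
Qed.
Lemma gq_gen n : gen2 gM hM (gq n).
Proof. induction n.
  - replace (gq 0) with Mid. constructor. apply Mat_eq; unfold gq, Mid; simpl; cring.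
  - replace (gq (S n)) with (Mmul (Minv_SL gM) (gq n)). apply gen_mul; auto. constructor.
    apply Mat_eq; unfold gq, gM, Mmul, Minv_SL; simpl; cring.
Qed.

Lemma K_entries n X : let K := Mmul (Mmul (gq n) X) (gp n) in
  m11 K = m11 X /\ m12 K = pw (/L) n * m12 X * pw (/L) n /\
  m21 K = pw L n * m21 X * pw L n /\ m22 K = m22 X.
Proof.
  destruct X as [x y u t]. unfold gq, gp, Mmul; simpl. cnv.
  repeat split; toC.
  - transitivity (x * (pw (/L) n * pw L n)). ring. rewrite <- pw_mul, mL, pw_one. ring.
  - ring.
  - ring.
  - transitivity (t * (pw (/L) n * pw L n)). ring. rewrite <- pw_mul, mL, pw_one. ring.
Qed.

Lemma Mdist_C P Q : Mdist P Q = (Cmod (m11 P - m11 Q) + Cmod (m12 P - m12 Q) +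
  Cmod (m21 P - m21 Q) + Cmod (m22 P - m22 Q))%R.
Proof. unfold Mdist. cnv. reflexivity. Qed.

Lemma pw_nz x n : x <> RtoC 0 -> pw x n <> RtoC 0.
Proof. intros Hx H. assert (Cmod (pw x n) = 0%R) by (rewrite H; apply Cmod_0).
  rewrite pw_mod in H0. revert H0. apply pow_nonzero. intro H1. apply Hx, Cmod_eq_0, H1. Qed.

Lemma C1_neq_C0 : RtoC 1 <> RtoC 0.
Proof. intro H. injection H. lra. Qed.

Lemma back n : B (S n) = RtoC 0 -> Cc (S n) = RtoC 0 ->
  (B n = RtoC 0 /\ Cc n = RtoC 0) \/ (A n = RtoC 0 /\ D n = RtoC 0).
Proof.
  destruct (rec n) as (_ & HB & HC & _). intros H1 H2. rewrite HB in H1. rewrite HC in H2.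
  assert (H1' : A n * B n * (L - /L) = RtoC 0).
  { replace (A n * B n * (L - /L)) with (- - (A n * B n * (L - /L))) by ring. rewrite H1. ring. }
  destruct (Cmod_mul0 _ _ H1') as [H3|H3]; [|exfalso; apply delta_nz; auto].
  destruct (Cmod_mul0 _ _ H2) as [H4|H4]; [|exfalso; apply delta_nz; auto].
  pose proof (hs_det n) as Hd.
  destruct (Cmod_mul0 _ _ H3) as [Ha|Hb]; destruct (Cmod_mul0 _ _ H4) as [Hc|Hd'].
  - exfalso. rewrite Ha, Hc in Hd. apply C1_neq_C0. rewrite <- Hd. ring.
  - right; auto.
  - left; auto.
  - exfalso. rewrite Hb, Hd' in Hd. apply C1_neq_C0. rewrite <- Hd. ring.
Qed.

Lemma not_anti n : ~ (A (S n) = RtoC 0 /\ D (S n) = RtoC 0).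
Proof. intros [H1 H2]. destruct (rec n) as (HA & _ & _ & HD). apply trace_nz.
  replace (L + /L) with (A (S n) + D (S n)) by (rewrite HA, HD; ring). rewrite H1, H2. ring. Qed.

Lemma diag_down n : B (S n) = RtoC 0 -> Cc (S n) = RtoC 0 ->
  (B 0 = RtoC 0 /\ Cc 0 = RtoC 0) \/ (A 0 = RtoC 0 /\ D 0 = RtoC 0).
Proof. induction n; intros H1 H2.
  - apply back; auto.
  - destruct (back _ H1 H2) as [[H3 H4]|H3]. apply IHn; auto. exfalso; apply (not_anti n); auto.
Qed.

Definition DA (X : Mat) := (m12 X = RtoC 0 /\ m21 X = RtoC 0) \/ (m11 X = RtoC 0 /\ m22 X = RtoC 0).

Lemma DA_gen : DA hM -> forall X, gen2 gM hM X -> DA X.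
Proof.
  intros Hh X HX. induction HX.
  - left. split; reflexivity.
  - left. split; reflexivity.
  - exact Hh.
  - left. unfold gM, Minv_SL; simpl. split; cring.
  - destruct Hh as [[H1 H2]|[H1 H2]]; [left|right]; unfold hM, Minv_SL in *; simpl in *;
      rewrite ?H1, ?H2; split; cring.
  - destruct A0 as [x1 x2 x3 x4], B0 as [y1 y2 y3 y4].
    unfold DA in *; simpl in *.
    destruct IHHX1 as [[H1 H2]|[H1 H2]]; destruct IHHX2 as [[H3 H4]|[H3 H4]]; subst;
      [left|right|right|left]; simpl; split; cring.
Qed.

Lemma elem_of_DA : DA hM -> elementary (gen2 gM hM).
Proof.
  intro Hh. exists Inf. split. exact I. exists (Inf :: BPt (RtoC 0) :: nil).
  intros X HX. pose proof (DA_gen Hh X HX) as HD. destruct X as [x y u t].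
  unfold DA in HD; simpl in HD. unfold act; simpl.
  destruct (Req_EM_T (fst u) 0); [destruct (Req_EM_T (snd u) 0)|].
  - left; reflexivity.
  - right; left. destruct HD as [[_ H]|[H _]].
    + subst u. simpl in n. lra.
    + subst x. f_equal. unfold Defs.Cdiv. cnv. toC. ring.
  - right; left. destruct HD as [[_ H]|[H _]].
    + subst u. simpl in n. lra.
    + subst x. f_equal. unfold Defs.Cdiv. cnv. toC. ring.
Qed.

Lemma core : (Cmod (L - RtoC 1) + Cmod (/L - RtoC 1) < 1)%R -> discrete (gen2 gM hM) ->
  non_elementary (gen2 gM hM) -> sqrt (Cmod (a*b*c*d)) <> ((1 - MM)/(MM*MM))%R.
Proof.
  intros HM Hd Hne Hs. fold MM in HM.
  destruct (Hd gM (gen_g _ _)) as [eps [Heps Hd']].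
  pose proof (v_ev Hs HM) as Hv.
  assert (He5 : (0 < eps/5)%R) by lra.
  destruct (Hv _ He5) as [Nv HNv].
  destruct (w_ev HM Hv _ He5) as [Nw HNw].
  destruct (z_ev HM Hv _ He5) as [Nz HNz].
  set (k := (Nv + Nw + Nz)%nat). set (n0 := S k). set (j1 := (k + S k)%nat).
  assert (Hj : (n0 + n0)%nat = S j1) by (unfold n0, j1; lia).
  set (Km := Mmul (Mmul (gq n0) (hs (S j1))) (gp n0)).
  assert (HK : gen2 gM hM Km).
  { unfold Km. apply gen_mul; [apply gen_mul|]. apply gq_gen. clear. induction j1 as [|j IH].
    simpl. apply gen_mul. apply gen_mul. apply gen_h. apply gen_g. apply gen_inv, gen_h.
    simpl hs. apply gen_mul. apply gen_mul; auto. apply gen_g. apply gen_inv; auto.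
    apply gp_gen. }
  destruct (K_entries n0 (hs (S j1))) as (E1 & E2 & E3 & E4). fold Km in E1, E2, E3, E4.
  destruct (rec j1) as (HA & _ & _ & HD).
  pose proof dl_pos. pose proof dl_le.
  assert (Hw : Cmod (m12 Km) = w (S j1)).
  { rewrite E2, !Cmod_mult, !pw_mod. unfold w, B. rewrite <- Hj, pow_add. ring. }
  assert (Hz : Cmod (m21 Km) = z (S j1)).
  { rewrite E3, !Cmod_mult, !pw_mod. unfold z, Cc. rewrite <- Hj, pow_add. ring. }
  assert (Hdist : (Mdist gM Km < eps)%R).
  { rewrite Mdist_C. rewrite E1, E4. fold (A (S j1)) (D (S j1)). rewrite HA, HD.
    change (m11 gM) with L; change (m12 gM) with (RtoC 0); change (m21 gM) with (RtoC 0); change (m22 gM) with (/L).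
    replace (L - (L + B j1 * Cc j1 * (L - / L))) with (- (B j1 * Cc j1 * (L - /L))) by ring.
    replace (/ L - (/ L - B j1 * Cc j1 * (L - / L))) with (B j1 * Cc j1 * (L - /L)) by ring.
    replace (RtoC 0 - m12 Km) with (- m12 Km) by ring.
    replace (RtoC 0 - m21 Km) with (- m21 Km) by ring.
    rewrite !Cmod_opp, Hw, Hz, Cmod_mult. fold (v j1) dl.
    assert (v j1 <= eps/5)%R by (apply HNv; unfold j1, k; lia).
    assert (w (S j1) <= eps/5)%R by (apply HNw; unfold j1, k; lia).
    assert (z (S j1) <= eps/5)%R by (apply HNz; unfold j1, k; lia).
    pose proof (v_ge0 j1). assert (v j1 * dl <= v j1)%R by nra. lra. }
  assert (HKg : Km = gM).
  { destruct (classic (Km = gM)) as [Q0|Q0]; auto. exfalso.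
    specialize (Hd' Km HK Q0). lra. }
  assert (HB0 : B (S j1) = RtoC 0).
  { assert (Cmod (B (S j1)) = 0%R).
    { assert (w (S j1) = 0%R) by (rewrite <- Hw, HKg; apply Cmod_0).
      unfold w in H1. apply Rmult_integral in H1. destruct H1; auto.
      exfalso. revert H1. apply pow_nonzero. pose proof Cmod_m_pos. lra. }
    apply Cmod_eq_0; auto. }
  assert (HC0 : Cc (S j1) = RtoC 0).
  { assert (Cmod (Cc (S j1)) = 0%R).
    { assert (z (S j1) = 0%R) by (rewrite <- Hz, HKg; apply Cmod_0).
      unfold z in H1. apply Rmult_integral in H1. destruct H1; auto.
      exfalso. revert H1. apply pow_nonzero. lra. }
    apply Cmod_eq_0; auto. }
  apply Hne. apply elem_of_DA. unfold DA.
  destruct (diag_down j1 HB0 HC0) as [Q0|Q0]; [left|right]; exact Q0.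
Qed.

End Core.
End Aux2.

Import Aux.

Theorem theorem1 (lam a b c d : Cpx) :
  Cmod lam > 1 ->
  in_SL2C (mkMat a b c d) ->
  let g := mkMat lam Czero Czero (Cinv lam) in
  let h := mkMat a b c d in
  let Mg := Cmod (Csub lam Cone) + Cmod (Csub (Cinv lam) Cone) in
  Mg < 1 ->
  discrete (gen2 g h) ->
  non_elementary (gen2 g h) ->
  sqrt (Cmod (Cmul (Cmul (Cmul a b) c) d)) <> (1 - Mg) / (Mg * Mg).
Proof.
  intros H1 H2 g h Mg HM Hd Hne.
  unfold Mg, g, h in *. clear g h Mg.
  rewrite cinv_eq in HM, Hd, Hne |- *. repeat rewrite cmod_eq in HM. repeat rewrite cmod_eq in H1. repeat rewrite cmod_eq.
  exact (Aux2.core lam a b c d H1 H2 HM Hd Hne).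
Qed.
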